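(* Let $\mathbb{F}$ be a field and let $(\mathbb{F}(\alpha,\beta),\sigma)$ be a bivariate difference field extension of $\mathbb{F}$ with $\sigma|_{\mathbb{F}}=\mathrm{id}$, $\sigma(\alpha)=\beta$, $\sigma(\beta)=u\alpha+v\beta$ ($u\in\mathbb{F}\setminus\{0\}$, $v\in\mathbb{F}$). Let $A=\begin{pmatrix}0&u\\1&v\end{pmatrix}$ and assume that $A$ has two distinct eigenvalues $\lambda_1\neq\lambda_2$ in $\mathbb{F}$ such that $\lambda_1/\lambda_2$ is not a root of unity. Let $a,b\in\mathbb{F}[\alpha,\beta]$ be two relatively prime homogeneous polynomials. Then $\mathrm{Spr}_\sigma(a,b)$ is a finite set.
   Context: A bivariate difference field extension $(\mathbb{F}(\alpha,\beta),\sigma)$ of a difference field $(\mathbb{F},\sigma)$ is the rational function field $\mathbb{F}(\alpha,\beta)$ in two algebraically independent transcendental elements $\alpha,\beta$ over $\mathbb{F}$, together with an automorphism $\sigma$ of $\mathbb{F}(\alpha,\beta)$ extending $\sigma$ on $\mathbb{F}$ and satisfying $\sigma(\alpha)=\beta$, $\sigma(\beta)=u\alpha+v\beta$. $\deg$ denotes total degree in $\alpha,\beta$. For nonzero $p,q\in\mathbb{F}[\alpha,\beta]$, the spread is $\mathrm{Spr}_\sigma(p,q)=\{m\in\mathbb{N} : \deg(\gcd(p,\sigma^m q))>0\}$. *)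

(* Defs.v *)
From HB Require Import structures.
From mathcomp Require Import all_boot all_order all_algebra.
From mathcomp Require Import mpoly.
Set Implicit Arguments. Unset Strict Implicit. Unset Printing Implicit Defensive.
Import Order.TTheory GRing.Theory Num.Theory.
Local Open Scope ring_scope.

Notation bipoly F := {mpoly F[2]}.

Definition alpha {F : fieldType} : bipoly F := 'X_(@ord0 1).
Definition beta {F : fieldType} : bipoly F := 'X_(@ord_max 1).

(* sigma on F[alpha,beta]: identity on F, alpha |-> beta, beta |-> u alpha + v beta.
   (Its restriction to F[alpha,beta] of the automorphism of F(alpha,beta).) *)
Definition sigma {F : fieldType} (u v : F) (p : bipoly F) : bipoly F :=
  comp_mpoly [tuple beta; u *: alpha + v *: beta] p.

Definition bdeg {F : fieldType} (p : bipoly F) : nat := (msize p).-1.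

Definition bdvd {F : fieldType} (d p : bipoly F) : Prop := exists q, p = q * d.

(* deg(gcd(p,q)) > 0  <->  p and q have a common divisor of positive degree *)
Definition gcd_nonconst {F : fieldType} (p q : bipoly F) : Prop :=
  exists d : bipoly F, (0 < bdeg d)%N /\ bdvd d p /\ bdvd d q.

Definition rel_prime {F : fieldType} (p q : bipoly F) : Prop := ~ gcd_nonconst p q.

Definition Spr {F : fieldType} (u v : F) (p q : bipoly F) : nat -> Prop :=
  fun m => gcd_nonconst p (iter m (sigma u v) q).

Definition finite_natset (S : nat -> Prop) : Prop :=
  exists N : nat, forall m, S m -> (m <= N)%N.

Definition matA {F : fieldType} (u v : F) : 'M[F]_2 :=
  \matrix_(i < 2, j < 2)
    (if i == 0 then (if j == 0 then 0 else u) else (if j == 0 then 1 else v)).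

(* Main.v *)
Require Import Defs.
From HB Require Import structures.
From mathcomp Require Import all_boot all_order all_algebra.
From mathcomp Require Import mpoly.
From mathcomp Require Import ring zify.
From Stdlib Require Import Classical.
Set Implicit Arguments. Unset Strict Implicit. Unset Printing Implicit Defensive.
Import GRing.Theory.
Local Open Scope ring_scope.

Definition sc (F : fieldType) (c : F) (p : {poly F}) := p \Po (c *: 'X).

Lemma coef_sc (F : fieldType) (c : F) p k : (sc c p)`_k = c ^+ k * p`_k.
Proof.
rewrite /sc comp_polyE coef_sum.
under eq_bigr => i _ do rewrite exprZn scalerA coefZ coefXn.
case: (ltnP k (size p)) => hk.
  rewrite (bigD1 (Ordinal hk)) //= eqxx mulr1 big1 ?addr0; first by rewrite mulrC.
  move=> j /= hj; have -> : (k == j) = false by apply/negbTE; rewrite eq_sym.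
  by rewrite mulr0.
rewrite big1 ?(nth_default 0 hk) ?mulr0 // => j _.
have : (j < k)%N by apply: leq_trans hk.
by rewrite ltn_neqAle eq_sym => /andP[/negbTE -> _]; rewrite mulr0.
Qed.

Lemma sc_comp (F : fieldType) (c d : F) p : sc c (sc d p) = sc (d * c) p.
Proof.
by rewrite /sc -comp_polyA comp_polyZ comp_polyX scalerA.
Qed.

Lemma sc1 (F : fieldType) (p : {poly F}) : sc 1 p = p.
Proof. by rewrite /sc scale1r comp_polyXr. Qed.

Lemma scK (F : fieldType) (c : F) p : c != 0 -> sc c^-1 (sc c p) = p.
Proof. by move=> hc; rewrite sc_comp mulfV // sc1. Qed.

Lemma size_sc (F : fieldType) (c : F) p : c != 0 -> size (sc c p) = size p.
Proof.
move=> hc; apply: size_comp_poly2.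
by rewrite size_scale // size_polyX.
Qed.

Lemma sc_dvd (F : fieldType) (c : F) p q : p %| q -> sc c p %| sc c q.
Proof. exact: dvdp_comp_poly. Qed.

Lemma sc_coprime (F : fieldType) (c : F) p q : coprimep p q -> coprimep (sc c p) (sc c q).
Proof. exact: coprimep_comp_poly. Qed.

Lemma sc_mul (F : fieldType) (c : F) p q : sc c (p * q) = sc c p * sc c q.
Proof. exact: comp_polyM. Qed.

Lemma coprime_self_sc (F : fieldType) (c : F) (g : {poly F}) :
  c != 0 -> irreducible_poly g -> g`_0 != 0 ->
  (forall k, (0 < k < size g)%N -> c ^+ k != 1) -> coprimep g (sc c g).
Proof.
move=> c0 [sg irr] g0 hc.
have gn0 : g != 0 by rewrite -size_poly_gt0 (ltn_trans _ sg).
case/boolP: (coprimep g (sc c g)) => // ncop; exfalso.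
have sd : size (gcdp g (sc c g)) != 1%N by rewrite -coprimep_def.
have deq := irr _ sd (dvdp_gcdl _ _).
have gdiv : g %| sc c g by rewrite -(eqp_dvdl _ deq) dvdp_gcdr.
have : g %= sc c g by rewrite -dvdp_size_eqp // size_sc.
case/eqpP => [[c1 c2] /= /andP[c1n0 c2n0] e].
have e0 := congr1 (fun p : {poly F} => p`_0) e; have en := congr1 (fun p : {poly F} => p`_(size g).-1) e.
rewrite /= !coefZ coef_sc expr0 mul1r in e0.
rewrite /= !coefZ coef_sc in en.
have c12 : c1 = c2 by apply: (mulIf g0).
subst c1.
have ln : g`_(size g).-1 != 0 by rewrite -lead_coefE lead_coef_eq0.
have : c ^+ (size g).-1 == 1.
  apply/eqP; apply: (mulIf ln); apply: (mulfI c2n0); rewrite mul1r en; ring.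
apply/negP/hc; move: sg; case: (size g) => [|[|n]] //= _; lia.
Qed.

Lemma coprime_sc2 (F : fieldType) (c1 c2 : F) (g : {poly F}) :
  c1 != 0 -> c2 != 0 -> irreducible_poly g -> g`_0 != 0 ->
  (forall k, (0 < k < size g)%N -> c1 ^+ k != c2 ^+ k) ->
  coprimep (sc c1 g) (sc c2 g).
Proof.
move=> h1 h2 irr g0 hk.
have -> : sc c2 g = sc c1 (sc (c2 / c1) g) by rewrite sc_comp mulfVK.
apply: sc_coprime; apply: coprime_self_sc => //.
  by rewrite mulf_neq0 // invr_eq0.
move=> k /hk; apply: contra; rewrite expr_div_n => /eqP e.
apply/eqP; rewrite -[c1 ^+ k]mul1r -e mulfVK // expf_neq0 //.
Qed.

Lemma nu_neq (F : fieldType) (nu : F) m m' k : nu != 0 ->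
  (forall n, (0 < n)%N -> nu ^+ n != 1) -> m != m' -> (0 < k)%N ->
  nu ^+ (m * k) != nu ^+ (m' * k).
Proof.
move=> n0 hn; wlog: m m' / (m < m')%N => [H|lt _ k0].
  move=> ne k0; case: (ltngtP m m') ne => h ne //.
    by apply: H => //; rewrite neq_ltn h.
  by rewrite eq_sym; apply: H => //; rewrite neq_ltn h ?orbT.
have -> : (m' * k = m * k + (m' - m) * k)%N by rewrite -mulnDl subnKC // ltnW.
rewrite exprD; apply/negP => /eqP e.
have : nu ^+ ((m' - m) * k) == 1.
  apply/eqP; apply: (mulfI (expf_neq0 (m * k) n0)); rewrite mulr1; exact: esym e.
by apply/negP/hn; rewrite muln_gt0 subn_gt0 lt.
Qed.

Lemma count_one (F : fieldType) (nu : F) (g B : {poly F}) (s : seq nat) :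
  nu != 0 -> (forall n, (0 < n)%N -> nu ^+ n != 1) -> irreducible_poly g ->
  g`_0 != 0 -> B != 0 ->
  uniq s -> (forall m, m \in s -> g %| sc (nu ^+ m) B) -> (size s <= (size B).-1)%N.
Proof.
move=> n0 hn irr g0 B0.
have gn0 : g != 0 by apply: irredp_neq0.
pose G m := sc (nu ^+ m)^-1 g.
have cn0 m : (nu ^+ m)^-1 != 0 by rewrite invr_eq0 expf_neq0.
have sG m : size (G m) = size g by rewrite size_sc.
have Gn0 m : G m != 0 by rewrite -size_poly_gt0 sG size_poly_gt0.
have key : forall s, uniq s -> (forall m, m \in s -> g %| sc (nu ^+ m) B) ->
    (\prod_(m <- s) G m %| B) && (size s < size (\prod_(m <- s) G m)%R)%N.
  clear s; elim => [|m s IH] /=; first by rewrite big_nil dvd1p size_poly1.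
  move=> /andP[ms us] h.
  have /andP[d1 s1] := IH us (fun x hx => h x (mem_behead (s := m :: s) hx)).
  have dm : G m %| B.
    by have := sc_dvd (nu ^+ m)^-1 (h m (mem_head _ _)); rewrite scK // expf_neq0.
  have cop : coprimep (G m) (\prod_(x <- s) G x).
    rewrite big_seq; apply: (big_ind (fun p => coprimep (G m) p)).
    - exact: coprimep1.
    - by move=> p q hp hq; rewrite coprimepMr hp hq.
    move=> x xs; apply: coprime_sc2 => // k /andP[k0 _].
    rewrite !exprVn -!exprM; apply/negP => /eqP e.
    have : nu ^+ (m * k) == nu ^+ (x * k).
      by rewrite -[nu ^+ (m * k)]invrK e invrK.
    apply/negP/nu_neq => //; apply/eqP => emx; move: ms; rewrite emx xs.
    done.
  rewrite big_cons Gauss_dvdp // dm d1 /=.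
  have pn0 : \prod_(x <- s) G x != 0 by rewrite prodf_seq_neq0; apply/allP => x _ /=; rewrite Gn0.
  rewrite size_mul // sG; move: s1 (irr.1); case: (size g) => [|[|n]] //=.
  by move=> s1 _; rewrite addSn ltnS (leq_trans s1) // leq_addl.
move=> us h; have /andP[d s1] := key s us h.
by move: (leq_trans s1 (dvdp_leq B0 d)); case: (size B).
Qed.

Lemma irr_div (F : fieldType) (p : {poly F}) :
  (1 < size p)%N -> exists g, irreducible_poly g /\ g %| p.
Proof.
move: {2}(size p) (leqnn (size p)) => n; elim: n p => [|n IH] p sp sp1.
  by move: (leq_trans sp1 sp).
have pn0 : p != 0 by rewrite -size_poly_gt0 (ltn_trans _ sp1).
case: (classic (forall q : {poly F}, size q != 1%N -> q %| p -> q %= p)) => H.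
  by exists p; split => //; split.
have [q Hq] : exists q : {poly F}, ~ (size q != 1%N -> q %| p -> q %= p).
  by apply: not_all_ex_not.
have [sq [qp nqp]] : size q != 1%N /\ q %| p /\ ~~ (q %= p).
  split; first by apply: NNPP => h; apply: Hq => /h.
  split; first by apply: NNPP => h; apply: Hq => _ /h.
  by apply/negP => h; apply: Hq.
have qn0 : q != 0 by apply: contraNneq pn0 => q0; move: qp; rewrite q0 dvd0p.
have sqp : (size q < size p)%N.
  by rewrite ltn_neqAle dvdp_leq // andbT dvdp_size_eqp.
have [g [ig gq]] : exists g, irreducible_poly g /\ g %| q.
  apply: IH; first by rewrite -ltnS (leq_trans sqp).
  by rewrite ltn_neqAle eq_sym sq size_poly_gt0 qn0.
by exists g; split => //; apply: dvdp_trans gq qp.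
Qed.

Definition PP (F : fieldType) (nu : F) (B A : {poly F}) (m : nat) :=
  exists g, irreducible_poly g /\ g`_0 != 0 /\ g %| A /\ g %| sc (nu ^+ m) B.

Lemma count_main (F : fieldType) (nu : F) (B : {poly F}) :
  nu != 0 -> (forall n, (0 < n)%N -> nu ^+ n != 1) -> B != 0 ->
  forall A, A != 0 -> forall s : seq nat, uniq s -> (forall m, m \in s -> PP nu B A m) ->
  (size s <= (size A).-1 * (size B).-1)%N.
Proof.
move=> n0 hn B0 A; move: {2}(size A) (leqnn (size A)) => n.
elim: n A => [|n IH] A sA A0.
  by move: A0; rewrite -size_poly_gt0 => /leq_trans /(_ sA).
case => [//|m0 s'] us hs; set s := m0 :: s' in us hs *.
have [g [ig [g0 [gA gB]]]] := hs m0 (mem_head _ _).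
pose P := fun m => g %| sc (nu ^+ m) B.
rewrite -(count_predC P s) -!size_filter.
have h1 : (size (filter P s) <= (size B).-1)%N.
  apply: (count_one n0 hn ig g0 B0); first exact: filter_uniq.
  by move=> m; rewrite mem_filter => /andP[].
have gn0 : g != 0 by apply: irredp_neq0.
set A' := A %/ g.
have eA : A' * g = A by apply: divpK.
have A'0 : A' != 0 by apply: contraNneq A0 => e; rewrite -eA e mul0r.
have sg : (1 < size g)%N := ig.1.
have sA' : size A' = (size A - (size g).-1)%N by apply: size_divp.
have sAge : (size g <= size A)%N by apply: dvdp_leq.
have h2 : (size (filter (predC P) s) <= (size A').-1 * (size B).-1)%N.
  apply: IH => //.
  - rewrite sA'; move: sA sg sAge; case: (size g) => [|k] //=; lia.
  - exact: filter_uniq.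
  move=> m; rewrite mem_filter => /andP[/= nP ms].
  have [g' [ig' [g'0 [g'A g'B]]]] := hs m ms.
  exists g'; split; [done|split; [done|split; [|done]]].
  have cop : coprimep g' g.
    case/boolP: (coprimep g' g) => // nc; exfalso.
    have sd : size (gcdp g' g) != 1%N by rewrite -coprimep_def.
    have e1 := ig.2 _ sd (dvdp_gcdr _ _).
    have gg' : g %| g' by rewrite -(eqp_dvdl _ e1) dvdp_gcdl.
    have sg1 : size g != 1%N by rewrite neq_ltn sg orbT.
    have e2 := ig'.2 _ sg1 gg'.
    by move/negP: nP; apply; rewrite /P (eqp_dvdl _ e2) g'B.
  by rewrite -(Gauss_dvdpl _ cop) eA.
move: h1 h2; rewrite sA'.
move: sg sAge; generalize (size g) (size A) (size B) (size (filter P s)) (size (filter (predC P) s)).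
move=> k a b x y; case: k => [|[|k]] //= _; case: a => [|a] //=; case: b => [|b] //=; nia.
Qed.

Lemma bounded_of_count (S : nat -> Prop) K :
  (forall s : seq nat, uniq s -> (forall m, m \in s -> S m) -> (size s <= K)%N) ->
  exists N, forall m, S m -> (m <= N)%N.
Proof.
move=> H; apply: NNPP => nb.
have unb : forall N, exists m, S m /\ (N < m)%N.
  move=> N; apply: NNPP => h; apply: nb; exists N => m Sm.
  rewrite leqNgt; apply/negP => lt; apply: h; by exists m.
have : forall k, exists s, uniq s /\ (forall m, m \in s -> S m) /\ size s = k.
  elim => [|k [s [us [ss sz]]]]; first by exists [::].
  have [m [Sm lt]] := unb (foldr maxn 0%N s).
  have mns : m \notin s.
    apply/negP => ms; have : (m <= foldr maxn 0%N s)%N.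
      elim: s ms {us ss sz lt} => //= x s IHs; rewrite inE => /orP[/eqP->|/IHs].
        exact: leq_maxl.
      by move/leq_trans; apply; exact: leq_maxr.
    by rewrite leqNgt lt.
  exists (m :: s); split; first by rewrite /= mns us.
  split; last by rewrite /= sz.
  by move=> x; rewrite inE => /orP[/eqP->|/ss].
move=> /(_ K.+1) [s [us [ss sz]]]; have := H s us ss; by rewrite sz ltnn.
Qed.

Lemma U (F : fieldType) (nu : F) (A B : {poly F}) : nu != 0 ->
  (forall n, (0 < n)%N -> nu ^+ n != 1) -> A != 0 -> B != 0 ->
  ~~ ((A`_0 == 0) && (B`_0 == 0)) ->
  exists N, forall m, (exists g : {poly F}, (1 < size g)%N /\ g %| A /\ g %| sc (nu ^+ m) B) ->
    (m <= N)%N.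
Proof.
move=> n0 hn A0 B0 h0.
apply: (@bounded_of_count _ ((size A).-1 * (size B).-1)%N) => s us hs.
apply: (count_main n0 hn B0 A0 us) => m /hs [g [sg [gA gB]]].
have [g' [ig' g'g]] := irr_div sg.
exists g'; split => //; split; last by split; apply: dvdp_trans g'g _.
apply: contra h0 => /eqP g'0.
have coef0 : forall p, g' %| p -> p`_0 = 0.
  by move=> p /dvdpP [q ->]; rewrite coef0M g'0 mulr0.
rewrite coef0 ?(dvdp_trans g'g) //=.
move: (coef0 _ (dvdp_trans g'g gB)); rewrite coef_sc expr0 mul1r.
by move=> ->; rewrite eqxx.
Qed.

Definition top (F : fieldType) (p : {mpoly F[2]}) := pihomog mdeg (msize p).-1 p.

Lemma topM (F : fieldType) (p q : {mpoly F[2]}) : p != 0 -> q != 0 ->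
  top (p * q) = top p * top q.
Proof.
move=> p0 q0.
have sp : (0 < msize p)%N by rewrite lt0n msize_poly_eq0.
have sq : (0 < msize q)%N by rewrite lt0n msize_poly_eq0.
rewrite /top msizeM //.
set e := (msize p).-1; set f := (msize q).-1.
have -> : ((msize p + msize q).-1.-1 = e + f)%N.
  by rewrite /e /f; lia.
have Ep := @pihomog_partitionE _ _ mdeg (msize p) p (leqnn _).
have Eq := @pihomog_partitionE _ _ mdeg (msize q) q (leqnn _).
have ep : (e < msize p)%N by rewrite /e prednK.
have eq : (f < msize q)%N by rewrite /f prednK.
have term (i : 'I_(msize p)) (j : 'I_(msize q)) :
    pihomog mdeg (e + f) (pihomog mdeg i p * pihomog mdeg j q) =
    if (i == e :> nat) && (j == f :> nat) then pihomog mdeg e p * pihomog mdeg f q else 0.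
  have ie : (i <= e)%N by rewrite -ltnS /e prednK.
  have jf : (j <= f)%N by rewrite -ltnS /f prednK.
  case: ifP => [/andP[/eqP -> /eqP ->]|H].
    by apply: pihomog_dE; apply: dhomogM; apply: pihomogP.
  apply: pihomog_ne0; last by apply: dhomogM; apply: pihomogP.
  apply/negP => /eqP H2; move/negP: H; apply; apply/andP; split; apply/eqP; lia.
rewrite {1}Ep {1}Eq big_distrlr /= raddf_sum.
under eq_bigr => i _ do rewrite raddf_sum.
transitivity (\sum_(i < msize p) \sum_(j < msize q)
   (if (i == e :> nat) && (j == f :> nat) then pihomog mdeg e p * pihomog mdeg f q else 0)).
  by apply: eq_bigr => i _; apply: eq_bigr => j _; exact: term.
rewrite (bigD1 (Ordinal ep)) //= [X in _ + X]big1 ?addr0; last first.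
  move=> i /= ie; rewrite big1 // => j _.
  by case: ifP => // /andP[/eqP ie2 _]; move: ie; rewrite -val_eqE /= ie2 eqxx.
rewrite (bigD1 (Ordinal eq)) //= big1 ?addr0 ?eqxx //.
move=> j /= je; case: ifP => //; rewrite ?eqxx /= => /eqP je2; move: je; rewrite -val_eqE /= je2 eqxx.
done.
Qed.

Lemma top_homog (F : fieldType) (p : {mpoly F[2]}) n : p \is n.-homog -> top p = p.
Proof. by move=> /dhomog_msize h; rewrite /top pihomog_dE. Qed.

Lemma top_div (F : fieldType) (a d : {mpoly F[2]}) n :
  a \is n.-homog -> a != 0 -> bdvd d a -> top d != 0 /\ bdvd (top d) a.
Proof.
move=> ha a0 [q e].
have q0 : q != 0 by apply: contraNneq a0 => q0; rewrite e q0 mul0r.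
have d0 : d != 0 by apply: contraNneq a0 => d0; rewrite e d0 mulr0.
have : a = top q * top d by rewrite -topM // -e (top_homog ha).
move=> e2; split; last by exists (top q).
by apply: contraNneq a0 => t0; rewrite e2 t0 mulr0.
Qed.

Definition ev (F : fieldType) (i : 'I_2) (p : {mpoly F[2]}) : {poly F} :=
  mmap (@polyC F) (fun k => if k == i then 'X else 1) p.

Lemma ev1E (F : fieldType) (i : 'I_2) (m : 'X_{1..2}) :
  mmap1 (fun k => if k == i then ('X : {poly F}) else 1) m = 'X ^+ (m i).
Proof.
rewrite /mmap1 (bigD1 i) //= eqxx big1 ?mulr1 // => k /negbTE ->.
by rewrite expr1n.
Qed.

Lemma evE (F : fieldType) (i : 'I_2) (p : {mpoly F[2]}) :
  ev i p = \sum_(m <- msupp p) p@_m *: 'X ^+ (m i).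
Proof.
rewrite /ev /mmap; apply: eq_bigr => m _.
by rewrite ev1E mul_polyC.
Qed.

Lemma mnm2_eq (m m' : 'X_{1..2}) (i : 'I_2) :
  mdeg m = mdeg m' -> m i = m' i -> m = m'.
Proof.
have L : lift ord0 (ord0 : 'I_1) = ord_max :> 'I_2 by apply: val_inj.
rewrite !mdegE !big_ord_recl !big_ord0 !addn0 L => hd hi.
apply/mnmP => k.
have [-> | ->] : k = ord0 \/ k = ord_max.
  by case: k => [[|[|]]] // ? ; [left|right]; apply: val_inj.
all: have [ei | ei] : i = ord0 \/ i = ord_max by
  case: i hi => [[|[|]]] // ? ; [left|right]; apply: val_inj.
all: subst i; move: hd hi.
all: rewrite /bump /=.
all: try lia.
Qed.

Lemma ev_coef (F : fieldType) (i : 'I_2) (p : {mpoly F[2]}) n m :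
  p \is n.-homog -> m \in msupp p -> (ev i p)`_(m i) = p@_m.
Proof.
move=> hp ms; rewrite evE coef_sum (big_rem m) //=.
rewrite coefZ coefXn eqxx mulr1 big_seq big1 ?addr0 // => m'.
rewrite (mem_rem_uniq _ (msupp_uniq p)) inE => /andP[nm m's].
rewrite coefZ coefXn; case: eqP => [e|]; last by rewrite mulr0.
case/negP: nm; apply/eqP; apply: (@mnm2_eq _ _ i) => //.
by rewrite (dhomog_mf hp ms) (dhomog_mf hp m's).
Qed.

Lemma ev_nonconst (F : fieldType) (h : {mpoly F[2]}) n :
  h \is n.-homog -> h != 0 -> (0 < n)%N -> exists i, (1 < size (ev i h))%N.
Proof.
move=> hh h0 n0.
have ms := mlead_supp h0; set m := mlead h in ms.
have md : mdeg m = n := dhomog_mf hh ms.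
have [i mi] : exists i : 'I_2, (0 < m i)%N.
  move: md; rewrite mdegE big_ord_recl big_ord_recl big_ord0 addn0.
  case: (posnP (m ord0)) => [z|p]; last by exists ord0.
  rewrite z add0n => e; exists (lift ord0 ord0); lia.
exists i; have c : (ev i h)`_(m i) != 0 by rewrite (ev_coef i hh ms) -mcoeff_msupp.
apply: (leq_ltn_trans mi); rewrite ltnNge; apply/negP => /(nth_default 0) e.
by rewrite e eqxx in c.
Qed.

Lemma ev_ne0 (F : fieldType) (i : 'I_2) (p : {mpoly F[2]}) n :
  p \is n.-homog -> p != 0 -> ev i p != 0.
Proof.
move=> hp p0; have ms := mlead_supp p0.
apply/eqP => e; have := ev_coef i hp ms; rewrite e coef0 => /esym /eqP.
by rewrite mcoeff_eq0 ms.
Qed.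

Lemma ev_coef0 (F : fieldType) (i : 'I_2) (p : {mpoly F[2]}) n :
  p \is n.-homog -> (ev i p)`_0 = 0 -> forall m, m \in msupp p -> (0 < m i)%N.
Proof.
move=> hp e m ms; rewrite lt0n; apply/eqP => mi.
have := ev_coef i hp ms; rewrite mi e => /esym /eqP.
by rewrite mcoeff_eq0 ms.
Qed.

Lemma Xdiv (F : fieldType) (i : 'I_2) (p : {mpoly F[2]}) :
  (forall m, m \in msupp p -> (0 < m i)%N) -> bdvd 'X_i p.
Proof.
move=> H; exists (\sum_(m <- msupp p) p@_m *: 'X_[m - U_(i)]).
rewrite {1}[p]mpolyE big_distrl /=; apply: eq_big_seq => m ms.
rewrite -scalerAl -mpolyXD; congr (_ *: 'X_[_]); apply/mnmP => k.
rewrite mnmDE mnmBE mnm1E; case: eqP => [<-|_]; last by rewrite subn0 addn0.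
by have := H m ms; rewrite /=; lia.
Qed.

Lemma bdeg_X (F : fieldType) (i : 'I_2) : (0 < bdeg ('X_i : {mpoly F[2]}))%N.
Proof. by rewrite /bdeg msizeX mdeg1. Qed.

Lemma comp_mpolyA2 (F : fieldType) (p : {mpoly F[2]}) (lq lr : 2.-tuple {mpoly F[2]}) :
  (p \mPo lq) \mPo lr = p \mPo [tuple (tnth lq k \mPo lr) | k < 2].
Proof.
rewrite [p \mPo lq]comp_mpolyEX [p \mPo [tuple _ | k < 2]]comp_mpolyEX raddf_sum /=.
apply: eq_bigr => m _.
rewrite comp_mpolyZ !comp_mpolyX rmorph_prod /=; congr (_ *: _); apply: eq_bigr => k _.
by rewrite rmorphXn /= tnth_map tnth_ord_tuple.
Qed.

Lemma ev_comp (F : fieldType) (i : 'I_2) (p : {mpoly F[2]}) (lq : 2.-tuple {mpoly F[2]}) :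
  ev i (p \mPo lq) = \sum_(m <- msupp p) p@_m *: \prod_(k < 2) (ev i (tnth lq k)) ^+ (m k).
Proof.
rewrite comp_mpolyEX /ev raddf_sum; apply: eq_bigr => m _.
rewrite /= mmapZ comp_mpolyX rmorph_prod /= mul_polyC; congr (_ *: _).
by apply: eq_bigr => k _; rewrite rmorphXn.
Qed.

Lemma prod2 (R : comRingType) (F : 'I_2 -> R) (i j : 'I_2) : j != i ->
  \prod_(k < 2) F k = F i * F j.
Proof.
move=> ji; rewrite (bigD1 i) // (bigD1 j) //= big1 ?mulr1 // => k /andP[ki kj].
by exfalso; move: (ltn_ord i) (ltn_ord j) (ltn_ord k) ki kj ji; rewrite -!val_eqE /=; lia.
Qed.

Lemma mdeg2 (m : 'X_{1..2}) (i j : 'I_2) : j != i -> mdeg m = (m i + m j)%N.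
Proof.
move=> ji; rewrite mdegE (bigD1 i) // (bigD1 j) //= big1 ?addn0 // => k /andP[ki kj].
by exfalso; move: (ltn_ord i) (ltn_ord j) (ltn_ord k) ki kj ji; rewrite -!val_eqE /=; lia.
Qed.

Definition Tm (F : fieldType) (lam : 'I_2 -> F) (m : nat) : 2.-tuple {mpoly F[2]} :=
  [tuple (lam k ^+ m) *: 'X_k | k < 2].

Lemma alg_aux (F : fieldType) (a b c q : F) : c != 0 -> q * a * b = c * a * q * (b / c).
Proof. by move=> hc; field. Qed.

Lemma ev_D (F : fieldType) (lam : 'I_2 -> F) (i j : 'I_2) m (p : {mpoly F[2]}) n :
  j != i -> lam j != 0 -> p \is n.-homog ->
  ev i (p \mPo Tm lam m) = (lam j ^+ (m * n)) *: sc ((lam i / lam j) ^+ m) (ev i p).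
Proof.
move=> ji lj hp.
have ev_k : forall (k : 'I_2) (c : F), ev i (c *: 'X_k) = c%:P * (if k == i then 'X else 1).
  by move=> k c; rewrite /ev /= mmapZ mmapX mmap1U.
rewrite ev_comp evE /sc raddf_sum /= scaler_sumr.
apply: eq_big_seq => m' ms.
rewrite (prod2 _ ji) !tnth_map !tnth_ord_tuple !ev_k eqxx (negbTE ji) mulr1.
have cX : forall (q : {poly F}) k, 'X^k \Po q = q ^+ k.
  move=> q; elim => [|k IH]; first by rewrite !expr0 -polyC1 comp_polyC.
  by rewrite !exprS comp_polyM comp_polyX IH.
rewrite linearZ /= cX.
have -> : n = (m' i + m' j)%N by rewrite -(mdeg2 _ ji); exact: (esym (dhomog_mf hp ms)).
rewrite !mul_polyC exprZn -polyC_exp mulrC mul_polyC !scalerA exprZn scalerA.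
congr (_ *: _).
rewrite expr_div_n -!exprM mulnDr exprD.
have h1 : lam j ^+ (m * m' i) != 0 by rewrite expf_neq0.
rewrite expr_div_n -!exprM.
have alg : forall (a b c q : F), c != 0 -> q * a * b = c * a * q * (b / c).
  by move=> a b c q hc; field.
by apply: alg; rewrite expf_neq0.
Qed.

Lemma homog_comp2 (F : fieldType) (p : {mpoly F[2]}) (lq : 2.-tuple {mpoly F[2]}) n :
  p \is n.-homog -> (forall k, tnth lq k \is 1.-homog) -> p \mPo lq \is n.-homog.
Proof.
move=> hp hl; rewrite comp_mpolyEX big_seq; apply: rpred_sum => m ms; apply: dhomogZ.
have ne : (ord_max : 'I_2) != ord0 by [].
rewrite comp_mpolyX (prod2 _ ne).
have -> : n = (1 * m ord0 + 1 * m ord_max)%N.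
  by rewrite !mul1n -(mdeg2 _ ne); exact: (esym (dhomog_mf hp ms)).
by apply: dhomogM; apply: dhomogMn.
Qed.

Lemma homogX1 (F : fieldType) (k : 'I_2) : ('X_k : {mpoly F[2]}) \is 1.-homog.
Proof. by rewrite dhomogX /= mdeg1. Qed.

Lemma Tm_homog (F : fieldType) (lam : 'I_2 -> F) m k : tnth (Tm lam m) k \is 1.-homog.
Proof. by rewrite tnth_map tnth_ord_tuple; apply: dhomogZ; apply: homogX1. Qed.

Lemma ev_dvd (F : fieldType) (i : 'I_2) (x y : {mpoly F[2]}) : bdvd x y -> ev i x %| ev i y.
Proof. by move=> [q ->]; rewrite /ev rmorphM /= dvdp_mull. Qed.

Lemma CB (F : fieldType) (lam : 'I_2 -> F) (a b : {mpoly F[2]}) na nb :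
  lam ord0 != 0 -> lam ord_max != 0 ->
  (forall n, (0 < n)%N -> (lam ord0 / lam ord_max) ^+ n != 1) ->
  a \is na.-homog -> b \is nb.-homog -> a != 0 -> b != 0 -> rel_prime a b ->
  exists N, forall m, gcd_nonconst a (b \mPo Tm lam m) -> (m <= N)%N.
Proof.
move=> l0 l1 hnu ha hb a0 b0 rp.
have nuP : forall i j : 'I_2, j != i ->
    lam i / lam j != 0 /\ forall n, (0 < n)%N -> (lam i / lam j) ^+ n != 1.
  have o2 : forall k : 'I_2, k = ord0 \/ k = ord_max.
    by case => [[|[|]]] // ?; [left|right]; apply: val_inj.
  move=> i j; case: (o2 i) => ->; case: (o2 j) => -> //= _.
    by split; [rewrite mulf_neq0 ?invr_eq0|].
  split; first by rewrite mulf_neq0 ?invr_eq0.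
  move=> n n0; rewrite -invf_div exprVn invr_eq1; exact: hnu.
have bound : forall i j : 'I_2, j != i -> exists N, forall m,
    (exists g : {poly F}, (1 < size g)%N /\ g %| ev i a /\
       g %| sc ((lam i / lam j) ^+ m) (ev i b)) -> (m <= N)%N.
  move=> i j ji; have [n0 hn] := nuP i j ji; apply: U => //.
  - exact: ev_ne0 ha a0.
  - exact: ev_ne0 hb b0.
  apply/negP => /andP[/eqP A0 /eqP B0]; apply: rp; exists 'X_i; split; first exact: bdeg_X.
  by split; apply: Xdiv; [exact: ev_coef0 ha A0 | exact: ev_coef0 hb B0].
have [N0 H0] := bound ord0 ord_max isT; have [N1 H1] := bound ord_max ord0 isT.
exists (maxn N0 N1) => m [d [dd [da db]]].
have hbT : b \mPo Tm lam m \is nb.-homog by apply: homog_comp2 => // k; apply: Tm_homog.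
have bT0 : b \mPo Tm lam m != 0.
  apply/eqP => e; have := @ev_D _ lam ord0 ord_max m b nb isT l1 hb.
  rewrite e /ev rmorph0 => /esym /eqP; rewrite scaler_eq0 (negbTE (expf_neq0 _ l1)) /=.
  rewrite -size_poly_eq0 size_sc ?expf_neq0 ?mulf_neq0 ?invr_eq0 // size_poly_eq0.
  by apply/negP; exact: (@ev_ne0 _ ord0 b nb hb b0).
have [t0 ta] := top_div ha a0 da.
have [_ tb] := top_div hbT bT0 db.
have ht : top d \is (bdeg d).-homog by rewrite /top /bdeg; exact: pihomogP.
have [i si] := ev_nonconst ht t0 dd.
have o2 : i = ord0 \/ i = ord_max.
  by case: i {si} => [[|[|]]] // ?; [left|right]; apply: val_inj.
case: o2 => ei; subst i.
  apply: leq_trans (H0 m _) (leq_maxl _ _); exists (ev ord0 (top d)); split => //.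
  split; first exact: ev_dvd ta.
  have := ev_dvd ord0 tb; rewrite (@ev_D _ lam ord0 ord_max m b nb isT l1 hb).
  by rewrite dvdpZr // expf_neq0.
apply: leq_trans (H1 m _) (leq_maxr _ _); exists (ev ord_max (top d)); split => //.
split; first exact: ev_dvd ta.
have := ev_dvd ord_max tb; rewrite (@ev_D _ lam ord_max ord0 m b nb isT l0 hb).
by rewrite dvdpZr // expf_neq0.
Qed.


Lemma eig_eq (F : fieldType) (u v l : F) : eigenvalue (matA u v) l -> l ^+ 2 = u + v * l.
Proof.
case/eigenvalueP => w e w0.
have e0 := congr1 (fun M : 'M[F]_(1,2) => M 0 0) e.
have e1 := congr1 (fun M : 'M[F]_(1,2) => M 0 1) e.
move: e0 e1; rewrite /= !mxE !big_ord_recl !big_ord0 !mxE /=.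
have L : lift ord0 (ord0 : 'I_1) = 1 :> 'I_2 by apply: val_inj.
have L0 : ord0 = 0 :> 'I_2 by apply: val_inj.
rewrite L L0 !addr0 mulr0 mulr1 add0r => e0 e1.
have w00 : w 0 0 != 0.
  apply: contraNneq w0 => z; apply/eqP/rowP => k; rewrite mxE.
  have [->|->] : k = 0 \/ k = 1 by case: k => [[|[|]]] // ?; [left|right]; apply: val_inj.
    exact: z.
  by rewrite e0 z mulr0.
apply: (mulIf w00); rewrite e0 in e1.
have e2 : l ^+ 2 * w 0 0 = l * (l * w 0 0) by ring.
by rewrite e2 -e1; ring.
Qed.

Definition Lf (F : fieldType) (l1 l2 : F) (k : 'I_2) : {mpoly F[2]} :=
  if k == ord0 then beta - l2 *: alpha else beta - l1 *: alpha.
Definition Lt (F : fieldType) (l1 l2 : F) := [tuple Lf l1 l2 k | k < 2].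
Definition Mf (F : fieldType) (l1 l2 : F) (k : 'I_2) : {mpoly F[2]} :=
  if k == ord0 then (l1 - l2)^-1 *: ('X_ord0 - 'X_ord_max)
  else (l1 - l2)^-1 *: (l1 *: 'X_ord0 - l2 *: 'X_ord_max).
Definition Mt (F : fieldType) (l1 l2 : F) := [tuple Mf l1 l2 k | k < 2].
Definition lamf (F : fieldType) (l1 l2 : F) (k : 'I_2) := if k == ord0 then l1 else l2.

Lemma compX (F : fieldType) (k : 'I_2) (lq : 2.-tuple {mpoly F[2]}) : 'X_k \mPo lq = tnth lq k.
Proof. by rewrite comp_mpolyXU (tnth_nth 0). Qed.

Lemma tnthL (F : fieldType) (l1 l2 : F) k : tnth (Lt l1 l2) k = Lf l1 l2 k.
Proof. by rewrite tnth_map tnth_ord_tuple. Qed.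
Lemma tnthM (F : fieldType) (l1 l2 : F) k : tnth (Mt l1 l2) k = Mf l1 l2 k.
Proof. by rewrite tnth_map tnth_ord_tuple. Qed.

Lemma o2 (k : 'I_2) : k = ord0 \/ k = ord_max.
Proof. by case: k => [[|[|]]] // ?; [left|right]; apply: val_inj. Qed.

Lemma C1 (F : fieldType) (l1 l2 : F) k : l1 != l2 -> Mf l1 l2 k \mPo Lt l1 l2 = 'X_k.
Proof.
move=> ne; have d0 : l1 - l2 != 0 by rewrite subr_eq0.
case: (o2 k) => ->; rewrite /Mf /=; rewrite comp_mpolyZ !raddfB /= ?comp_mpolyZ !compX !tnthL /Lf /= /alpha /beta.
  transitivity (((l1 - l2)^-1 * (l1 - l2)) *: ('X_ord0 : {mpoly F[2]})).
    by rewrite -!mul_mpolyC; ring.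
  by rewrite mulVf // scale1r.
transitivity (((l1 - l2)^-1 * (l1 - l2)) *: ('X_ord_max : {mpoly F[2]})).
  by rewrite -!mul_mpolyC; ring.
by rewrite mulVf // scale1r.
Qed.

Lemma C2 (F : fieldType) (l1 l2 : F) k : l1 != l2 -> Lf l1 l2 k \mPo Mt l1 l2 = 'X_k.
Proof.
move=> ne; have d0 : l1 - l2 != 0 by rewrite subr_eq0.
case: (o2 k) => ->; rewrite /Lf /= /alpha /beta !raddfB /= !comp_mpolyZ !compX !tnthM /Mf /=.
  transitivity (((l1 - l2)^-1 * (l1 - l2)) *: ('X_ord0 : {mpoly F[2]})).
    by rewrite -!mul_mpolyC; ring.
  by rewrite mulVf // scale1r.
transitivity (((l1 - l2)^-1 * (l1 - l2)) *: ('X_ord_max : {mpoly F[2]})).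
  by rewrite -!mul_mpolyC; ring.
by rewrite mulVf // scale1r.
Qed.

Lemma C3 (F : fieldType) (u v l1 l2 : F) k : u = - (l1 * l2) -> v = l1 + l2 ->
  Lf l1 l2 k \mPo [tuple beta; u *: alpha + v *: beta] = lamf l1 l2 k *: Lf l1 l2 k.
Proof.
move=> hu hv; case: (o2 k) => ->; rewrite /Lf /lamf /= /alpha /beta !raddfB /= !comp_mpolyZ !comp_mpolyXU /=;
  rewrite /alpha /beta hu hv -!mul_mpolyC; ring.
Qed.

Lemma sigma_iter (F : fieldType) (u v l1 l2 : F) (p : {mpoly F[2]}) m :
  u = - (l1 * l2) -> v = l1 + l2 ->
  iter m (sigma u v) (p \mPo Lt l1 l2) = (p \mPo Tm (lamf l1 l2) m) \mPo Lt l1 l2.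
Proof.
move=> hu hv; elim: m => [|m IH] /=.
  congr (_ \mPo _); rewrite -[LHS]comp_mpoly_id; congr (_ \mPo _).
  by apply: eq_from_tnth => k; rewrite !tnth_map !tnth_ord_tuple expr0 scale1r.
rewrite IH /sigma !comp_mpolyA2; congr (_ \mPo _); apply: eq_from_tnth => k.
rewrite !tnth_map !tnth_ord_tuple !comp_mpolyZ !compX !tnth_map !tnth_ord_tuple.
by rewrite (C3 _ hu hv) scalerA exprSr.
Qed.

Lemma gcd_transfer (F : fieldType) (lq lr : 2.-tuple {mpoly F[2]}) (x y : {mpoly F[2]}) :
  (forall p, (p \mPo lq) \mPo lr = p) -> gcd_nonconst x y ->
  gcd_nonconst (x \mPo lq) (y \mPo lq).
Proof.
move=> K [d [dd [[q1 e1] [q2 e2]]]]; exists (d \mPo lq); split; last first.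
  by split; [exists (q1 \mPo lq); rewrite e1 rmorphM | exists (q2 \mPo lq); rewrite e2 rmorphM].
move: dd; rewrite /bdeg !ltnNge; apply: contra => h.
have /msize1_polyC e : (msize (d \mPo lq) <= 1)%N by move: h; case: (msize _) => [|[|]].
by rewrite -(K d) e comp_mpolyC msizeC; case: (_ != 0).
Qed.

Unset Implicit Arguments.
Set Strict Implicit.

Theorem theorem2p3 (F : fieldType) (u v : F) (lambda1 lambda2 : F)
    (a b : {mpoly F[2]}) :
  u != 0 ->
  lambda1 != lambda2 ->
  eigenvalue (matA u v) lambda1 ->
  eigenvalue (matA u v) lambda2 ->
  (forall n : nat, (0 < n)%N -> ~~ n.-unity_root (lambda1 / lambda2)) ->
  a != 0 -> b != 0 ->
  (exists d : nat, a \is d.-homog) ->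
  (exists d : nat, b \is d.-homog) ->
  rel_prime a b ->
  finite_natset (Spr u v a b).
Proof.
move=> u0 ne e1 e2 hur a0 b0 [na ha] [nb hb] rp.
have E1 := eig_eq e1; have E2 := eig_eq e2.
have hv : v = lambda1 + lambda2.
  have : (lambda1 - lambda2) * (lambda1 + lambda2 - v) = 0.
    transitivity (lambda1 ^+ 2 - lambda2 ^+ 2 - v * (lambda1 - lambda2)); first by ring.
    by rewrite E1 E2; ring.
  move/eqP; rewrite mulf_eq0 subr_eq0 (negbTE ne) /= subr_eq0 => /eqP ->; done.
have hu : u = - (lambda1 * lambda2).
  have -> : u = lambda1 ^+ 2 - v * lambda1 by rewrite E1; ring.
  by rewrite hv; ring.
have l10 : lambda1 != 0 by apply: contraNneq u0 => z; rewrite hu z mul0r oppr0.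
have l20 : lambda2 != 0 by apply: contraNneq u0 => z; rewrite hu z mulr0 oppr0.
set L := Lt lambda1 lambda2; set M := Mt lambda1 lambda2.
have KM : forall p, (p \mPo M) \mPo L = p.
  move=> p; rewrite comp_mpolyA2 -[RHS]comp_mpoly_id; congr (_ \mPo _).
  by apply: eq_from_tnth => k; rewrite !tnth_map !tnth_ord_tuple C1.
have KL : forall p, (p \mPo L) \mPo M = p.
  move=> p; rewrite comp_mpolyA2 -[RHS]comp_mpoly_id; congr (_ \mPo _).
  by apply: eq_from_tnth => k; rewrite !tnth_map !tnth_ord_tuple C2.
set a' := a \mPo M; set b' := b \mPo M.
have hM : forall k, tnth M k \is 1.-homog.
  move=> k; rewrite tnthM /Mf; case: ifP => _; apply: dhomogZ; apply: rpredB;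
    rewrite ?homogX1 //; apply: dhomogZ; exact: homogX1.
have ha' : a' \is na.-homog := homog_comp2 ha hM.
have hb' : b' \is nb.-homog := homog_comp2 hb hM.
have a'0 : a' != 0 by apply: contraNneq a0 => e; rewrite -(KM a) -/a' e comp_mpoly0.
have b'0 : b' != 0 by apply: contraNneq b0 => e; rewrite -(KM b) -/b' e comp_mpoly0.
have rp' : rel_prime a' b'.
  by move=> g; apply: rp; have := gcd_transfer KL g; rewrite !KM.
have hnu : forall n, (0 < n)%N ->
    (lamf lambda1 lambda2 ord0 / lamf lambda1 lambda2 ord_max) ^+ n != 1.
  by move=> n n0; rewrite /lamf /= -unity_rootE; exact: hur.
have [N HN] := @CB _ (lamf lambda1 lambda2) a' b' na nb l10 l20 hnu ha' hb' a'0 b'0 rp'.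
exists N => m Sm; apply: HN.
move: Sm; rewrite /Spr -(KM a) -(KM b) -/a' -/b' sigma_iter // => g.
by have := gcd_transfer KM g; rewrite !KL.
Qed.
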